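(* If $(A,W)$ is a $T_1$ Pratt comonoid with $W$ countably infinite, then there exist crosswords over $W$ with infinitely many distinct rows and infinitely many distinct columns.
   Context: A Pratt comonoid is a pair $(A,W)$ where $A$ is a set and $W$ is a set of subsets of $A$ such that (i) $\emptyset\in W$ and $A\in W$; (ii) whenever $C\subseteq A\times A$ is such that for every $a\in A$ both the $a$-th row $\{b\mid (a,b)\in C\}$ and the $a$-th column $\{b\mid (b,a)\in C\}$ belong to $W$ (such $C$ is called a crossword over $W$), the diagonal $\{b\mid (b,b)\in C\}$ also belongs to $W$. $(A,W)$ is $T_1$ if for all distinct $a,b\in A$ some member of $W$ contains $a$ but not $b$. *)

(* Defs.v *)
(* Subsets of A are predicates A -> Prop; set equality is
   Leibniz equality of predicates (which, with the whitelisted functional and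
   propositional extensionality axioms, coincides with extensional equality). *)

Definition row {A : Type} (C : A -> A -> Prop) (a : A) : A -> Prop :=
  fun b => C a b.
Definition column {A : Type} (C : A -> A -> Prop) (a : A) : A -> Prop :=
  fun b => C b a.
Definition diagonal {A : Type} (C : A -> A -> Prop) : A -> Prop :=
  fun b => C b b.

Definition crossword {A : Type} (W : (A -> Prop) -> Prop) (C : A -> A -> Prop) : Prop :=
  forall a : A, W (row C a) /\ W (column C a).

Definition pratt_comonoid {A : Type} (W : (A -> Prop) -> Prop) : Prop :=
  W (fun _ => False) /\ W (fun _ => True) /\
  (forall C : A -> A -> Prop, crossword W C -> W (diagonal C)).

Definition T1 {A : Type} (W : (A -> Prop) -> Prop) : Prop :=
  forall a b : A, a <> b -> exists S, W S /\ S a /\ ~ S b.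

Definition countably_infinite {X : Type} (W : X -> Prop) : Prop :=
  exists e : nat -> X,
    (forall m n, e m = e n -> m = n) /\
    (forall S, W S <-> exists n, e n = S).

Definition infinitely_many_distinct {A Y : Type} (f : A -> Y) : Prop :=
  exists g : nat -> A, forall m n, m <> n -> f (g m) <> f (g n).

(* Main.v *)
Require Import Defs.
From Stdlib Require Import Classical ClassicalEpsilon FunctionalExtensionality PropExtensionality List FinFun Lia Arith.
Import ListNotations.

Lemma pext {A : Type} (P Q : A -> Prop) : (forall x, P x <-> Q x) -> P = Q.
Proof. intros H; apply functional_extensionality; intro x; apply propositional_extensionality; apply H. Qed.

Lemma W_ext {A : Type} (W : (A -> Prop) -> Prop) P Q : W P -> (forall x, P x <-> Q x) -> W Q.
Proof. intros HP H; rewrite <- (pext _ _ H); exact HP. Qed.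

Lemma W_inter {A : Type} (W : (A -> Prop) -> Prop) (U V : A -> Prop) :
  pratt_comonoid W -> W U -> W V -> W (fun x => U x /\ V x).
Proof.
  intros [H0 [H1 H2]] HU HV.
  apply (W_ext W (diagonal (fun x y => U x /\ V y))); [| intro; unfold diagonal; tauto].
  apply H2. intro a. split.
  - unfold row. destruct (classic (U a)).
    + apply (W_ext W V); [auto | intro; tauto].
    + apply (W_ext W (fun _ => False)); [auto | intro; tauto].
  - unfold column. destruct (classic (V a)).
    + apply (W_ext W U); [auto | intro; tauto].
    + apply (W_ext W (fun _ => False)); [auto | intro; tauto].
Qed.

Lemma W_union {A : Type} (W : (A -> Prop) -> Prop) (U V : A -> Prop) :
  pratt_comonoid W -> W U -> W V -> W (fun x => U x \/ V x).
Proof.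
  intros [H0 [H1 H2]] HU HV.
  apply (W_ext W (diagonal (fun x y => U x \/ V y))); [| intro; unfold diagonal; tauto].
  apply H2. intro a. split.
  - unfold row. destruct (classic (U a)).
    + apply (W_ext W (fun _ => True)); [auto | intro; tauto].
    + apply (W_ext W V); [auto | intro; tauto].
  - unfold column. destruct (classic (V a)).
    + apply (W_ext W (fun _ => True)); [auto | intro; tauto].
    + apply (W_ext W U); [auto | intro; tauto].
Qed.

Lemma all_from_singletons {A : Type} (W : (A -> Prop) -> Prop) :
  pratt_comonoid W -> (forall a : A, W (fun x => x = a)) -> forall D, W D.
Proof.
  intros [H0 [H1 H2]] Hs D.
  apply (W_ext W (diagonal (fun x y => x = y /\ D x))).
  - apply H2. intro a. split.
    + unfold row. destruct (classic (D a)).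
      * apply (W_ext W (fun x => x = a)); [auto|]. intro x; split; [intros ->; auto | intros [-> _]; auto].
      * apply (W_ext W (fun _ => False)); [auto | intro; tauto].
    + unfold column. destruct (classic (D a)).
      * apply (W_ext W (fun x => x = a)); [auto|]. intro x; split; [intros ->; auto | intros [-> _]; auto].
      * apply (W_ext W (fun _ => False)); [auto|]. intro x; split; [tauto|]. intros [-> ?]; tauto.
  - intro x; unfold diagonal; split; intros; [tauto | split; auto].
Qed.

Lemma all_from_cosingletons {A : Type} (W : (A -> Prop) -> Prop) :
  pratt_comonoid W -> (forall a : A, W (fun x => x <> a)) -> forall D, W D.
Proof.
  intros [H0 [H1 H2]] Hs D.
  apply (W_ext W (diagonal (fun x y => x <> y \/ D x))).
  - apply H2. intro a. split.
    + unfold row. destruct (classic (D a)).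
      * apply (W_ext W (fun _ => True)); [auto | intro; tauto].
      * apply (W_ext W (fun x => x <> a)); [auto|]. intro x; split; intros Hx.
        -- left; intro; apply Hx; auto.
        -- destruct Hx; [intro; subst; tauto | tauto].
    + unfold column. destruct (classic (D a)).
      * apply (W_ext W (fun _ => True)); [auto|]. intro x; split; [|tauto]. intros _.
        destruct (classic (x = a)); [subst; tauto | tauto].
      * apply (W_ext W (fun x => x <> a)); [auto|]. intro x; split; intros Hx; [tauto|].
        destruct Hx; [auto| intro; subst; tauto].
  - intro x; unfold diagonal; split; intros; [|tauto]. destruct H; [exfalso; auto | auto].
Qed.

Lemma cantor {A : Type} (W : (A -> Prop) -> Prop) (F : (nat -> Prop) -> A -> Prop) (q : nat -> A) :
  countably_infinite W -> (forall D, W (F D)) -> (forall D k, F D (q k) <-> D k) -> False.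
Proof.
  intros [e [Hinj He]] HW HF.
  set (D := fun k => ~ e k (q k)).
  destruct (proj1 (He (F D)) (HW D)) as [m Hm].
  pose proof (HF D m) as H. rewrite <- Hm in H. unfold D in H. tauto.
Qed.

Lemma disjoint_family {A : Type} (W : (A -> Prop) -> Prop) (P : nat -> A -> Prop) (q : nat -> A) :
  pratt_comonoid W -> countably_infinite W -> (forall k, W (P k)) ->
  (forall j k y, P j y -> P k y -> j = k) -> (forall k, P k (q k)) -> False.
Proof.
  intros HP HC HW Hdis Hq.
  apply (cantor W (fun D x => exists j, D j /\ P j x) q HC).
  - intro D. pose proof HP as [H0 [H1 H2]].
    apply (W_ext W (diagonal (fun x y => exists j, D j /\ P j x /\ P j y))).
    + apply H2. intro a. split.
      * unfold row. destruct (classic (exists j, D j /\ P j a)) as [[j [Dj Pj]] | Hn].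
        -- apply (W_ext W (P j)); [auto|]. intro y. split.
           ++ intro. exists j. auto.
           ++ intros [j' [_ [Pa Py]]]. rewrite (Hdis j j' a Pj Pa). exact Py.
        -- apply (W_ext W (fun _ => False)); [auto|]. intro y; split; [tauto|].
           intros [j [Dj [Pa _]]]. apply Hn; eauto.
      * unfold column. destruct (classic (exists j, D j /\ P j a)) as [[j [Dj Pj]] | Hn].
        -- apply (W_ext W (P j)); [auto|]. intro y. split.
           ++ intro. exists j. auto.
           ++ intros [j' [_ [Py Pa]]]. rewrite (Hdis j j' a Pj Pa). exact Py.
        -- apply (W_ext W (fun _ => False)); [auto|]. intro y; split; [tauto|].
           intros [j [Dj [_ Pa]]]. apply Hn; eauto.
    + intro x; unfold diagonal; split; intros [j Hj]; exists j; tauto.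
  - intros D k. split.
    + intros [j [Dj Pj]]. rewrite (Hdis _ _ _ Pj (Hq k)) in Dj. exact Dj.
    + intro. exists k. auto.
Qed.

Lemma everything_false {A : Type} (W : (A -> Prop) -> Prop) (p : nat -> A) :
  countably_infinite W -> (forall D, W D) -> (forall m n, p m = p n -> m = n) -> False.
Proof.
  intros HC HW Hp.
  apply (cantor W (fun D x => exists k, x = p k /\ D k) p); auto.
  intros D k; split.
  - intros [j [Hj Dj]]. rewrite (Hp _ _ Hj). exact Dj.
  - intro. exists k; auto.
Qed.

(* pigeonhole: A is infinite *)
Fixpoint subs {A : Type} (l : list A) : list (list A) :=
  match l with
  | nil => nil :: nil
  | x :: l' => subs l' ++ map (cons x) (subs l')
  end.

Lemma subs_spec {A : Type} (P : A -> Prop) (l : list A) :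
  exists l', In l' (subs l) /\ incl l' l /\ forall x, In x l -> (P x <-> In x l').
Proof.
  induction l as [|a l IH].
  - exists nil. split; [left; auto | split; [intros ? [] | intros x []]].
  - destruct IH as [l' [Hin [Hinc Hx]]]. destruct (classic (P a)).
    + exists (a :: l'). split; [simpl; apply in_or_app; right; apply in_map; auto|].
      split; [intros y [<-|Hy]; [left; auto | right; auto]|].
      intros x [<- | Hxl].
      * split; intros; [left; auto | auto].
      * split; intro Hp.
        -- right. apply Hx; auto.
        -- destruct Hp as [<- | Hp]; [auto | apply Hx; auto].
    + exists l'. split; [simpl; apply in_or_app; left; auto|].
      split; [intros y Hy; right; auto|].
      intros x [<-|Hxl].
      * split; [tauto|]. intro Hi. apply (Hx a (Hinc a Hi)) in Hi. tauto.
      * apply Hx; auto.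
Qed.

Lemma fresh {A : Type} (e : nat -> A -> Prop) :
  (forall m n, e m = e n -> m = n) -> forall L : list A, exists x, ~ In x L.
Proof.
  intros Hinj L. apply NNPP. intro Hno.
  assert (Hall : forall x, In x L).
  { intro x. apply NNPP. intro H. apply Hno. exists x. auto. }
  assert (Hs : forall n, exists l', In l' (subs L) /\ incl l' L /\
                 forall x, In x L -> (e n x <-> In x l')) by (intro; apply subs_spec).
  set (F := fun n => proj1_sig (constructive_indefinite_description _ (Hs n))).
  assert (HF : forall n, In (F n) (subs L) /\ incl (F n) L /\
                 forall x, In x L -> (e n x <-> In x (F n))).
  { intro n. exact (proj2_sig (constructive_indefinite_description _ (Hs n))). }
  assert (Finj : forall m n, F m = F n -> m = n).
  { intros m n H. apply Hinj. apply pext. intro x.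
    destruct (HF m) as [_ [_ Hm]]. destruct (HF n) as [_ [_ Hn]].
    rewrite (Hm x (Hall x)), (Hn x (Hall x)), H. tauto. }
  set (N := length (subs L)).
  assert (Hnd : NoDup (map F (seq 0 (S N)))).
  { apply Injective_map_NoDup. intros m n; apply Finj. apply seq_NoDup. }
  assert (Hinc : incl (map F (seq 0 (S N))) (subs L)).
  { intros y Hy. apply in_map_iff in Hy. destruct Hy as [n [<- _]]. apply HF. }
  pose proof (NoDup_incl_length Hnd Hinc) as H.
  rewrite length_map, length_seq in H. unfold N in H. lia.
Qed.

Fixpoint pts {A : Type} (f : list A -> A) (k : nat) : list A :=
  match k with
  | 0 => nil
  | S k => f (pts f k) :: pts f k
  end.

Lemma pts_in {A : Type} (f : list A -> A) : forall k j, j < k -> In (f (pts f j)) (pts f k).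
Proof.
  induction k; intros j Hj; [lia|]. simpl.
  destruct (Nat.eq_dec j k) as [->|]; [left; auto | right; apply IHk; lia].
Qed.

Lemma inj_seq {A : Type} (e : nat -> A -> Prop) :
  (forall m n, e m = e n -> m = n) -> exists p : nat -> A, forall m n, p m = p n -> m = n.
Proof.
  intros Hinj.
  set (f := fun L => proj1_sig (constructive_indefinite_description _ (fresh e Hinj L))).
  assert (Hf : forall L, ~ In (f L) L).
  { intro L. exact (proj2_sig (constructive_indefinite_description _ (fresh e Hinj L))). }
  exists (fun k => f (pts f k)).
  assert (key : forall m n, m < n -> f (pts f m) <> f (pts f n)).
  { intros m n Hmn Heq. apply (Hf (pts f n)). rewrite <- Heq. apply pts_in; auto. }
  intros m n H. destruct (Nat.lt_total m n) as [Hl|[Hl|Hl]]; auto.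
  - exfalso; apply (key m n Hl H).
  - exfalso; apply (key n m Hl); auto.
Qed.

Lemma transition (P : nat -> Prop) : forall j k, k <= j -> P k -> ~ P j -> exists k0, P k0 /\ ~ P (S k0).
Proof.
  induction j; intros k Hk Pk Pj.
  - assert (k = 0) by lia. subst. contradiction.
  - destruct (classic (P j)) as [H|H].
    + exists j; auto.
    + destruct (Nat.eq_dec k (S j)) as [->|Hne]; [contradiction|].
      apply (IHj k); auto; lia.
Qed.

Lemma core {A : Type} (W : (A -> Prop) -> Prop) (D K : nat -> A -> Prop) (y z : nat -> A) :
  pratt_comonoid W ->
  (forall k, W (D k)) -> (forall n m x, n <= m -> D m x -> D n x) ->
  (forall x, exists k, ~ D k x) -> (forall k, D k (y k)) -> (forall k, ~ D (S k) (y k)) ->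
  (forall k, W (K k)) -> (forall n m x, n <= m -> K n x -> K m x) ->
  (forall k, ~ K k (z k)) -> (forall k, K (S k) (z k)) ->
  exists C : A -> A -> Prop,
    crossword W C /\
    infinitely_many_distinct (row C) /\
    infinitely_many_distinct (column C).
Proof.
  intros HP HDW HDa HDe Hy1 Hy2 HKW HKm Hz1 Hz2.
  pose proof HP as [H0 [H1 H2]].
  exists (fun x y => exists k, D k x /\ K k y). split; [|split].
  - intro a. split.
    + unfold row. destruct (classic (exists k, D k a)) as [[k Hk]|Hn].
      * destruct (HDe a) as [j Hj].
        assert (Hkj : k <= j).
        { destruct (le_lt_dec k j) as [|Hl]; auto. exfalso. apply Hj. apply (HDa j k); auto; lia. }
        destruct (transition (fun k => D k a) j k Hkj Hk Hj) as [k0 [Hk1 Hk2]].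
        apply (W_ext W (K k0)); auto. intro w. split.
        -- intro. exists k0; auto.
        -- intros [k' [Hd Hk']].
           assert (k' <= k0).
           { destruct (le_lt_dec k' k0) as [|Hl]; auto. exfalso. apply Hk2. apply (HDa (S k0) k'); auto. }
           apply (HKm k' k0); auto.
      * apply (W_ext W (fun _ => False)); auto. intro w; split; [tauto|].
        intros [k [Hd _]]. apply Hn; eauto.
    + unfold column. destruct (classic (exists k, K k a)) as [[k Hk]|Hn].
      * assert (Hleast : exists k0, K k0 a /\ forall k', k' < k0 -> ~ K k' a).
        { destruct (classic (K 0 a)) as [H|H].
          - exists 0. split; auto. intros; lia.
          - destruct (transition (fun k => ~ K k a) k 0 ltac:(lia) H ltac:(tauto)) as [k1 [Hk1 Hk2]].
            exists (S k1). split; [apply NNPP; auto|].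
            intros k' Hk' HK. apply Hk1. apply (HKm k' k1); auto; lia. }
        destruct Hleast as [k0 [Hk0 Hl]].
        apply (W_ext W (D k0)); auto. intro w. split.
        -- intro. exists k0; auto.
        -- intros [k' [Hd Hk']].
           assert (k0 <= k').
           { destruct (le_lt_dec k0 k') as [|Hlt]; auto. exfalso. apply (Hl k'); auto. }
           apply (HDa k0 k'); auto.
      * apply (W_ext W (fun _ => False)); auto. intro w; split; [tauto|].
        intros [k [_ Hk]]. apply Hn; eauto.
  - exists y.
    assert (key : forall m n, m < n ->
      row (fun x y => exists k, D k x /\ K k y) (y m) <> row (fun x y => exists k, D k x /\ K k y) (y n)).
    { intros m n Hmn Heq.
      assert (H : row (fun x y => exists k, D k x /\ K k y) (y n) (z m)).
      { unfold row. exists (S m). split; auto. apply (HDa (S m) n); auto. }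
      rewrite <- Heq in H. unfold row in H. destruct H as [k [Hd Hk]].
      assert (k <= m).
      { destruct (le_lt_dec k m) as [|Hl]; auto. exfalso. apply (Hy2 m). apply (HDa (S m) k); auto. }
      apply (Hz1 m). apply (HKm k m); auto. }
    intros m n Hmn Heq. destruct (Nat.lt_total m n) as [Hl|[Hl|Hl]].
    + exact (key m n Hl Heq).
    + contradiction.
    + exact (key n m Hl (eq_sym Heq)).
  - exists z.
    assert (key : forall m n, m < n ->
      column (fun x y => exists k, D k x /\ K k y) (z m) <> column (fun x y => exists k, D k x /\ K k y) (z n)).
    { intros m n Hmn Heq.
      assert (H : column (fun x y => exists k, D k x /\ K k y) (z m) (y (S m))).
      { unfold column. exists (S m). split; auto. }
      rewrite Heq in H. unfold column in H. destruct H as [k [Hd Hk]].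
      assert (S n <= k).
      { destruct (le_lt_dec (S n) k) as [|Hl]; auto. exfalso. apply (Hz1 n). apply (HKm k n); auto; lia. }
      apply (Hy2 (S m)). apply (HDa (S (S m)) k); auto; lia. }
    intros m n Hmn Heq. destruct (Nat.lt_total m n) as [Hl|[Hl|Hl]].
    + exact (key m n Hl Heq).
    + contradiction.
    + exact (key n m Hl (eq_sym Heq)).
Qed.

Fixpoint idx (g : nat -> nat) (k : nat) : nat :=
  match k with
  | 0 => 0
  | S k => Nat.max (S (idx g k)) (g (idx g k))
  end.

Lemma idx_S1 g k : S (idx g k) <= idx g (S k).
Proof. change (idx g (S k)) with (Nat.max (S (idx g k)) (g (idx g k))). lia. Qed.
Lemma idx_S2 g k : g (idx g k) <= idx g (S k).
Proof. change (idx g (S k)) with (Nat.max (S (idx g k)) (g (idx g k))). lia. Qed.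
Lemma idx_mono g : forall j k, j <= k -> idx g j <= idx g k.
Proof.
  intros j k H. induction H; auto. pose proof (idx_S1 g m). lia.
Qed.
Lemma idx_ge g : forall k, k <= idx g k.
Proof. induction k; [lia|]. pose proof (idx_S1 g k). lia. Qed.

Lemma build {A : Type} (W : (A -> Prop) -> Prop) (D K : nat -> A -> Prop) :
  pratt_comonoid W ->
  (forall n, W (D n)) -> (forall n m x, n <= m -> D m x -> D n x) ->
  (forall N, exists x, D N x) -> (forall x, exists n, ~ D n x) ->
  (forall n, W (K n)) -> (forall n m x, n <= m -> K n x -> K m x) ->
  (forall N, exists z, ~ K N z /\ exists M, K M z) ->
  exists C : A -> A -> Prop,
    crossword W C /\
    infinitely_many_distinct (row C) /\
    infinitely_many_distinct (column C).
Proof.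
  intros HP HDW HDa HDn HDe HKW HKm HKn.
  assert (HDp : forall N, exists yM : A * nat, D N (fst yM) /\ ~ D (snd yM) (fst yM)).
  { intro N. destruct (HDn N) as [x Hx]. destruct (HDe x) as [M HM]. exists (x, M); auto. }
  assert (HKp : forall N, exists zM : A * nat, ~ K N (fst zM) /\ K (snd zM) (fst zM)).
  { intro N. destruct (HKn N) as [z [Hz [M HM]]]. exists (z, M); auto. }
  set (pD := fun N => proj1_sig (constructive_indefinite_description _ (HDp N))).
  assert (HpD : forall N, D N (fst (pD N)) /\ ~ D (snd (pD N)) (fst (pD N))).
  { intro N. exact (proj2_sig (constructive_indefinite_description _ (HDp N))). }
  set (pK := fun N => proj1_sig (constructive_indefinite_description _ (HKp N))).
  assert (HpK : forall N, ~ K N (fst (pK N)) /\ K (snd (pK N)) (fst (pK N))).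
  { intro N. exact (proj2_sig (constructive_indefinite_description _ (HKp N))). }
  set (gD := fun N => snd (pD N)).
  set (gK := fun N => snd (pK N)).
  apply (core W (fun k => D (idx gD k)) (fun k => K (idx gK k))
            (fun k => fst (pD (idx gD k))) (fun k => fst (pK (idx gK k))) HP).
  - intro; auto.
  - intros n m x H. apply (HDa _ (idx gD m)). apply idx_mono; auto.
  - intro x. destruct (HDe x) as [n Hn]. exists n. intro H. apply Hn.
    apply (HDa n (idx gD n)); auto. apply idx_ge.
  - intro k. apply HpD.
  - intros k H. apply (proj2 (HpD (idx gD k))). apply (HDa _ (idx gD (S k))); auto. apply (idx_S2 gD k).
  - intro; auto.
  - intros n m x H. apply (HKm (idx gK n)). apply idx_mono; auto.
  - intro k. apply HpK.
  - intro k. apply (HKm (gK (idx gK k))). apply (idx_S2 gK k). apply HpK.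
Qed.

Lemma W_imp {A : Type} (W : (A -> Prop) -> Prop) (E : A -> Prop) (a : A) :
  pratt_comonoid W -> W E -> W (fun x => E a -> E x).
Proof.
  intros HP HE. pose proof HP as [H0 [H1 H2]].
  destruct (classic (E a)).
  - apply (W_ext W E); auto. intro; tauto.
  - apply (W_ext W (fun _ => True)); auto. intro; tauto.
Qed.

Lemma W_andnot {A : Type} (W : (A -> Prop) -> Prop) (E : A -> Prop) (b : A) :
  pratt_comonoid W -> W E -> W (fun x => ~ E b /\ E x).
Proof.
  intros HP HE. pose proof HP as [H0 [H1 H2]].
  destruct (classic (E b)).
  - apply (W_ext W (fun _ => False)); auto. intro; tauto.
  - apply (W_ext W E); auto. intro; tauto.
Qed.

Theorem proposition8p6 (A : Type) (W : (A -> Prop) -> Prop) :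
  pratt_comonoid W -> T1 W -> countably_infinite W ->
  exists C : A -> A -> Prop,
    crossword W C /\
    infinitely_many_distinct (row C) /\
    infinitely_many_distinct (column C).
Proof.
  intros HP HT HC.
  pose proof HC as [e [Hinj He]].
  assert (We : forall n, W (e n)) by (intro n; apply He; exists n; auto).
  assert (HT' : forall x y, x <> y -> exists i, e i x /\ ~ e i y).
  { intros x y Hxy. destruct (HT x y Hxy) as [S0 [HS [Hx Hy]]].
    destruct (proj1 (He S0) HS) as [i Hi]. exists i. rewrite Hi. auto. }
  destruct (inj_seq e Hinj) as [p Hp].
  assert (Ha : exists a, ~ W (fun x => x = a)).
  { apply NNPP; intro H. apply (everything_false W p HC); auto.
    apply all_from_singletons; auto. intro a. apply NNPP. intro H'. apply H. exists a; auto. }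
  assert (Hb : exists b, ~ W (fun x => x <> b)).
  { apply NNPP; intro H. apply (everything_false W p HC); auto.
    apply all_from_cosingletons; auto. intro a. apply NNPP. intro H'. apply H. exists a; auto. }
  destruct Ha as [a Ha]. destruct Hb as [b Hb].
  set (K := fun n x => exists i, i <= n /\ ~ e i b /\ e i x).
  assert (HKW : forall n, W (K n)).
  { induction n.
    - apply (W_ext W (fun x => ~ e 0 b /\ e 0 x)); [apply W_andnot; auto|].
      intro x; unfold K; split.
      + intro; exists 0; split; auto.
      + intros [i [Hi Hx]]. assert (i = 0) by lia. subst; auto.
    - apply (W_ext W (fun x => K n x \/ (~ e (S n) b /\ e (S n) x))).
      + apply W_union; auto. apply W_andnot; auto.
      + intro x; unfold K; split.
        * intros [[i [Hi Hx]] | Hx]; [exists i; split; [lia | auto] | exists (S n); auto].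
        * intros [i [Hi Hx]]. destruct (Nat.eq_dec i (S n)) as [->|Hne]; [right; auto|].
          left. exists i. split; [lia | auto]. }
  assert (HKm : forall n m x, n <= m -> K n x -> K m x).
  { intros n m x H [i [Hi Hx]]. exists i. split; [lia | auto]. }
  assert (HKn : forall N, exists z, ~ K N z /\ exists M, K M z).
  { intro N. apply NNPP. intro Hn. apply Hb.
    apply (W_ext W (K N)); auto. intro x. split.
    - intros HK ->. destruct HK as [i [_ [Hi1 Hi2]]]. auto.
    - intros Hx. destruct (HT' x b Hx) as [i [Hi1 Hi2]].
      apply NNPP. intro HK. apply Hn. exists x. split; auto. exists i. exists i; auto. }
  set (S0 := fun n x => forall i, i <= n -> e i a -> e i x).
  assert (HSW : forall n, W (S0 n)).
  { induction n.
    - apply (W_ext W (fun x => e 0 a -> e 0 x)); [apply W_imp; auto|].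
      intro x; unfold S0; split.
      + intros H i Hi. assert (i = 0) by lia. subst; auto.
      + intros H. apply H; auto.
    - apply (W_ext W (fun x => S0 n x /\ (e (S n) a -> e (S n) x))).
      + apply W_inter; auto. apply W_imp; auto.
      + intro x; unfold S0; split.
        * intros [H1 H2] i Hi. destruct (Nat.eq_dec i (S n)) as [->|Hne]; auto.
          apply H1; lia.
        * intros H. split; [intros i Hi; apply H; lia | apply H; auto]. }
  assert (HSa : forall n m x, n <= m -> S0 m x -> S0 n x).
  { intros n m x H Hx i Hi. apply Hx. lia. }
  assert (HSin : forall n, S0 n a) by (intros n i _ H; exact H).
  assert (HScap : forall x, (forall n, S0 n x) -> x = a).
  { intros x Hx. apply NNPP. intro Hne. destruct (HT' a x (fun H => Hne (eq_sym H))) as [i [Hi1 Hi2]].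
    apply Hi2. apply (Hx i i); auto. }
  assert (HSn : forall N, exists x, S0 N x /\ x <> a).
  { intro N. apply NNPP. intro Hn. apply Ha.
    apply (W_ext W (S0 N)); auto. intro x. split.
    - intro Hx. apply NNPP. intro Hne. apply Hn. exists x; auto.
    - intros ->. auto. }
  destruct (classic (exists R, W R /\ ~ R a /\ forall N, exists x, R x /\ S0 N x)) as [[R [HRW [HRa HRN]]] | Hno].
  - apply (build W (fun n x => R x /\ S0 n x) K HP); auto.
    + intro n. apply W_inter; auto.
    + intros n m x H [H1 H2]. split; auto. apply (HSa n m); auto.
    + intro x. apply NNPP. intro H. apply HRa.
      assert (x = a).
      { apply HScap. intro n. apply NNPP. intro H'. apply H. exists n. tauto. }
      subst. apply NNPP. intro H'. apply H. exists 0. tauto.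
  - exfalso.
    assert (Hdis : forall R, W R -> ~ R a -> exists N, forall x, ~ (R x /\ S0 N x)).
    { intros R HR HRa. apply NNPP. intro H. apply Hno. exists R. split; [auto|split; [auto|]].
      intro N. apply NNPP. intro H'. apply H. exists N. intros x Hx. apply H'. exists x; auto. }
    assert (Hpick : forall N, exists t : A * (A -> Prop) * nat,
      S0 N (fst (fst t)) /\ W (snd (fst t)) /\ snd (fst t) (fst (fst t)) /\
      forall x, ~ (snd (fst t) x /\ S0 (snd t) x)).
    { intro N. destruct (HSn N) as [x [Hx Hxa]].
      destruct (HT x a Hxa) as [R [HR [HRx HRa]]].
      destruct (Hdis R HR HRa) as [M HM].
      exists (x, R, M). simpl. auto. }
    set (pk := fun N => proj1_sig (constructive_indefinite_description _ (Hpick N))).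
    assert (Hpk : forall N, S0 N (fst (fst (pk N))) /\ W (snd (fst (pk N))) /\
       snd (fst (pk N)) (fst (fst (pk N))) /\ forall x, ~ (snd (fst (pk N)) x /\ S0 (snd (pk N)) x)).
    { intro N. exact (proj2_sig (constructive_indefinite_description _ (Hpick N))). }
    set (g := fun N => snd (pk N)).
    set (P := fun k x => snd (fst (pk (idx g k))) x /\ S0 (idx g k) x).
    assert (Hsep : forall j k y, j < k -> snd (fst (pk (idx g j))) y -> S0 (idx g k) y -> False).
    { intros j k y Hjk H1 H2. apply (proj2 (proj2 (proj2 (Hpk (idx g j)))) y). split; auto.
      apply (HSa _ (idx g k)); auto.
      pose proof (idx_S2 g j). pose proof (idx_mono g (S j) k Hjk). unfold g in *. lia. }
    apply (disjoint_family W P (fun k => fst (fst (pk (idx g k)))) HP HC).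
    + intro k. apply W_inter; auto. apply Hpk.
    + intros j k y [Hj1 Hj2] [Hk1 Hk2].
      destruct (Nat.lt_total j k) as [Hl|[Hl|Hl]]; auto.
      * exfalso. apply (Hsep j k y); auto.
      * exfalso. apply (Hsep k j y); auto.
    + intro k. unfold P. split; apply Hpk.
Qed.
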